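(* Let $s,D\in\mathbb N$, let $\mathcal G=\{G_1,\dots,G_t\}$ be a graph family, and let $\phi:\mathcal H\hookrightarrow\mathcal G$ be an $(s,D)$-good embedding of a rooted $[t]$-edge-colored graph $\mathcal H$. Suppose $h,h'$ are non-adjacent vertices of $\mathcal H$ with $\phi(h)\phi(h')\in E(G_r)$ for some $r\in[t]$. Let $\mathcal H'$ be the rooted graph obtained from $\mathcal H$ by adding an edge $hh'$ of color $r$, with root set equal to the roots of $\mathcal H$ together with $h$, $h'$ and all ancestors of $h$ and of $h'$. Then $\phi$ is an $(s,D)$-good embedding of $\mathcal H'$ into $\mathcal G$.
   Context: A graph family $\mathcal G=\{G_1,\dots,G_t\}$ is a collection of $t$ simple graphs on a common finite vertex set $V$. For $X\subseteq V\times[t]$, $\Gamma_{\mathcal G}(X)=\bigcup_{(v,i)\in X}\{u\in V:uv\in E(G_i)\}$. A $[t]$-edge-colored graph $\mathcal H$ is a simple graph with each edge colored in $[t]$; $H_i$ is its spanning subgraph of color-$i$ edges and $\deg_{H_i}(h)$ the number of color-$i$ edges at $h$. An embedding $\phi:\mathcal H\hookrightarrow\mathcal G$ is an injective map $V(\mathcal H)\to V$ with $\phi(x)\phi(y)\in E(G_i)$ for every edge $xy$ of color $i$. A rooted $[t]$-edge-colored graph is one with a distinguished set of roots such that, after deleting all edges with both ends roots, every connected component is a tree containing exactly one root; for a non-root $h$ the unique path from $h$ to the root set (meeting it only at its last vertex) determines the parent of $h$ (its neighbour on the path), its ancestors (the other vertices of the path), and $c(h)$, the color of the edge from $h$ to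 its parent. For fixed $D$: $P_\phi(\mathcal H)=\{(\phi(h),c(h)):h\text{ non-root}\}$ and, for $X\subseteq V\times[t]$, $R(X,\phi)=|\Gamma_{\mathcal G}(X)\setminus\phi(V(\mathcal H))|-\sum_{(v,i)\in X}[D-\deg_{H_i}(\phi^{-1}(v))]-|P_\phi(\mathcal H)\cap X|$, with $\deg_{H_i}(\phi^{-1}(v))=0$ if $v\notin\phi(V(\mathcal H))$. The embedding $\phi$ is $(s,D)$-good if $R(X,\phi)\ge0$ for every $X\subseteq V\times[t]$ with $|X|\le s$. *)

(* Defs.v *)
From HB Require Import structures.
From mathcomp Require Import all_boot all_order all_algebra.
From Stdlib Require Import ClassicalEpsilon.
Set Implicit Arguments. Unset Strict Implicit. Unset Printing Implicit Defensive.
Import Order.TTheory GRing.Theory Num.Theory.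

Definition asb (P : Prop) : bool :=
  if excluded_middle_informative P then true else false.

Section Defs.
Variables (V W : finType) (t : nat).

Definition graph_family (G : 'I_t -> rel V) : Prop :=
  (forall i x, ~~ G i x x) /\ (forall i x y, G i x y = G i y x).

(* A [t]-edge-coloured simple graph on W: col x y = Some i iff xy is an
   edge of colour i; col x y = None iff x,y non-adjacent. *)
Definition colored_graph (col : W -> W -> option 'I_t) : Prop :=
  (forall x, col x x = None) /\ (forall x y, col x y = col y x).

Definition hadj (col : W -> W -> option 'I_t) : rel W :=
  fun x y => col x y != None.

Definition hdeg (col : W -> W -> option 'I_t) (i : 'I_t) (w : W) : nat :=
  #|[set u | col w u == Some i]|.

Definition forest_rel (col : W -> W -> option 'I_t) (roots : {set W}) : rel W :=
  fun x y => hadj col x y && ~~ ((x \in roots) && (y \in roots)).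

Definition acyclic (e : rel W) : Prop :=
  forall p : seq W, uniq p -> 3 <= size p -> ~~ cycle e p.

(* Rooted: after deleting root-root edges, every connected component is a
   tree (connected + acyclic) containing exactly one root. *)
Definition rooted (col : W -> W -> option 'I_t) (roots : {set W}) : Prop :=
  acyclic (forest_rel col roots) /\
  forall x, #|[set r in roots | connect (forest_rel col roots) x r]| = 1.

Definition root_path (col : W -> W -> option 'I_t) (roots : {set W})
    (h : W) (p : seq W) : bool :=
  [&& p != [::], path (hadj col) h p, uniq (h :: p),
      last h p \in roots & all (fun v => v \notin roots) (belast h p)].

Definition ancestors (col : W -> W -> option 'I_t) (roots : {set W}) (h : W)
  : {set W} :=
  [set a | asb (exists p, root_path col roots h p /\ a \in p)].

Definition add_edge (col : W -> W -> option 'I_t) (h h' : W) (r : 'I_t) :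
  W -> W -> option 'I_t :=
  fun x y => if ((x == h) && (y == h')) || ((x == h') && (y == h))
             then Some r else col x y.

Definition embedding (G : 'I_t -> rel V) (col : W -> W -> option 'I_t)
    (phi : W -> V) : Prop :=
  injective phi /\ forall x y i, col x y = Some i -> G i (phi x) (phi y).

Definition Pset (col : W -> W -> option 'I_t) (roots : {set W})
    (phi : W -> V) : {set V * 'I_t} :=
  [set vc | asb (exists h p, h \notin roots /\ root_path col roots h p /\
                  phi h = vc.1 /\ col h (head h p) = Some vc.2)].

Definition Gamma (G : 'I_t -> rel V) (X : {set V * 'I_t}) : {set V} :=
  [set u | [exists x in X, G x.2 x.1 u]].

(* deg_{H_i}(phi^{-1}(v)), = 0 if v not in the image of phi *)
Definition degpre (col : W -> W -> option 'I_t) (phi : W -> V) (v : V)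
    (i : 'I_t) : nat :=
  \sum_(w | phi w == v) hdeg col i w.

Local Open Scope ring_scope.

Definition Rval (G : 'I_t -> rel V) (col : W -> W -> option 'I_t)
    (roots : {set W}) (phi : W -> V) (D : nat) (X : {set V * 'I_t}) : int :=
  (#|Gamma G X :\: (phi @: [set: W])|%:Z)
  - (\sum_(x in X) ((D%:Z) - (degpre col phi x.1 x.2)%:Z))
  - (#|Pset col roots phi :&: X|%:Z).

Definition good_embedding (G : 'I_t -> rel V) (col : W -> W -> option 'I_t)
    (roots : {set W}) (phi : W -> V) (s D : nat) : Prop :=
  embedding G col phi /\
  forall X : {set V * 'I_t}, (#|X| <= s)%N -> 0 <= Rval G col roots phi D X.

End Defs.

(* Main.v *)
Require Import Defs.
From mathcomp Require Import all_boot all_order all_algebra.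
From Stdlib Require Import ClassicalEpsilon.
Set Implicit Arguments. Unset Strict Implicit. Unset Printing Implicit Defensive.
From mathcomp Require Import zify.

Lemma asbP (P : Prop) : reflect P (asb P).
Proof. rewrite /asb; case: excluded_middle_informative => H; constructor => //. Qed.

Section Gen.
Variable T : eqType.

Lemma path_weaken (e e' : rel T) (P : pred T) x p :
  (forall u v, P u -> e u v -> e' u v) -> all P (belast x p) ->
  path e x p -> path e' x p.
Proof.
move=> He; elim: p x => [|y p IH] x //= /andP[Px Hb] /andP[exy Hp].
by rewrite (He _ _ Px exy) (IH _ Hb Hp).
Qed.

Lemma path_all_tgt (e : rel T) (P : pred T) x p :
  (forall u v, e u v -> P v) -> path e x p -> all P p.
Proof.
move=> He; elim: p x => [|y p IH] x //= /andP[exy Hp].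
by rewrite (He _ _ exy) (IH _ Hp).
Qed.

Lemma path_restrict (e : rel T) (P : pred T) x p :
  P x -> all P p -> path e x p -> path (fun u v => [&& e u v, P u & P v]) x p.
Proof.
elim: p x => [|y p IH] x //= Px /andP[Py Hall] /andP[exy Hp].
by rewrite exy Px Py (IH _ Py Hall Hp).
Qed.

Lemma cut_path (e : rel T) (P : pred T) x p :
  path e x p -> P (last x p) -> ~~ P x ->
  exists q r, [/\ p = q ++ r, q != [::], path e x q, P (last x q)
                & all (predC P) (belast x q)].
Proof.
elim: p x => [|y p IH] x /=; first by move=> _ ->.
move=> /andP[exy Hp] Hl nPx.
case Py: (P y).
  by exists [:: y], p; rewrite /= exy Py nPx.
have [q [r [-> _ Hq Hlq Hb]]] := IH y Hp Hl (negbT Py).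
by exists (y :: q), r; rewrite /= exy Hq Hlq nPx Hb.
Qed.

End Gen.
Section Main.
Variables (W : finType) (t : nat) (col : W -> W -> option 'I_t) (roots : {set W}) (h h' : W) (r : 'I_t).
Hypothesis Hcol : colored_graph col.
Hypothesis Hroot : rooted col roots.
Hypothesis Hhh : col h h' = None.

Let F := forest_rel col roots.
Let col' := add_edge col h h' r.
Let R' := roots :|: [set h; h'] :|: ancestors col roots h :|: ancestors col roots h'.
Let F' := forest_rel col' R'.

Lemma col_sym x y : col x y = col y x.
Proof. exact: (proj2 Hcol). Qed.

Lemma F_sym : symmetric F.
Proof.
move=> x y; rewrite /F /forest_rel /hadj col_sym.
by case: (x \in roots); case: (y \in roots).
Qed.

Lemma hadj_F u v : u \notin roots -> hadj col u v -> F u v.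
Proof. by rewrite /F /forest_rel => /negbTE -> ->. Qed.

Lemma rootsR' x : x \in roots -> x \in R'.
Proof. by rewrite /R' !inE => ->. Qed.
Lemma hR' : h \in R'. Proof. by rewrite /R' !inE eqxx !orbT. Qed.
Lemma h'R' : h' \in R'. Proof. by rewrite /R' !inE eqxx !orbT. Qed.
Lemma ancR' y x : y \in [set h; h'] -> x \in ancestors col roots y -> x \in R'.
Proof. by rewrite /R' !inE => /orP[]/eqP-> ->; rewrite !orbT. Qed.

Lemma col'_eq u v : u \notin R' -> col' u v = col u v.
Proof.
move=> uR; rewrite /col' /add_edge.
case: (u =P h) => [eu|_]; first by rewrite eu hR' in uR.
by case: (u =P h') => [eu|_]; first by rewrite eu h'R' in uR.
Qed.

Lemma F'F u v : F' u v -> F u v.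
Proof.
rewrite /F' /F /forest_rel /hadj.
case uR: (u \in R').
  case vR: (v \in R'); first by rewrite andbF.
  move=> /andP[Hc _].
  have vR0 : v \notin roots.
    by apply/negP => /rootsR'; rewrite vR.
  rewrite (negbTE vR0) andbF andbT.
  rewrite /col' /add_edge in Hc. move: Hc.
  case: ifP => //; case/orP=> /andP[_ /eqP ev]; by rewrite ev ?hR' ?h'R' in vR.
move=> /andP[Hc _].
rewrite -col'_eq ?uR // Hc /=.
by apply/negP => /andP[/rootsR' ]; rewrite uR.
Qed.

Lemma count1_ex x : exists2 rho, rho \in roots & connect F x rho.
Proof.
have /eqP/cards1P[z Hz] := Hroot.2 x.
have : z \in [set r0 in roots | connect F x r0] by rewrite Hz set11.
by rewrite inE => /andP[]; exists z.
Qed.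

Lemma count1_uniq x a b : a \in roots -> b \in roots ->
  connect F x a -> connect F x b -> a = b.
Proof.
move=> aR bR ca cb.
have /eqP/cards1P[z Hz] := Hroot.2 x.
have : a \in [set r0 in roots | connect F x r0] by rewrite inE aR ca.
have : b \in [set r0 in roots | connect F x r0] by rewrite inE bR cb.
by rewrite -/F Hz !inE => /eqP-> /eqP->.
Qed.

Lemma rp_F v q : root_path col roots v q -> path F v q.
Proof.
case/and5P=> _ pth _ _ Hb.
apply: (path_weaken (P := fun x => x \notin roots)) pth => // u w.
exact: hadj_F.
Qed.

Lemma rp_exists v : v \notin roots -> exists q, root_path col roots v q.
Proof.
move=> vR.
have [rho rhoR /connectP[p pth erho]] := count1_ex v.
rewrite erho in rhoR; move: rhoR.
case: (shortenP pth) => p' pth' up _ lR.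
have [q [r0 [ep qn pq lq bq]]] := cut_path (P := fun x => x \in roots) pth' lR vR.
exists q; apply/and5P; split => //.
- by apply: sub_path pq => x y /andP[].
- by move: up; rewrite ep -cat_cons cat_uniq => /and3P[].
Qed.

Lemma anc_rp g y : y \in ancestors col roots g -> y \notin roots ->
  exists q, root_path col roots y q /\ {subset q <= ancestors col roots g}.
Proof.
rewrite inE => /asbP[p [rp yp]] yR.
case/splitPr: yp rp => p1 p2 rp.
have rp' := rp; case/and5P: rp' => _ pth up lR Hb.
exists p2; split; last first.
  by move=> z zp; rewrite inE; apply/asbP; exists (p1 ++ y :: p2); split => //; rewrite mem_cat inE zp !orbT.
rewrite last_cat /= in lR.
apply/and5P; split => //.
- by apply/eqP => e; rewrite e /= in lR; rewrite lR in yR.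
- by move: pth; rewrite cat_path => /andP[_] /= /andP[].
- by move: up; rewrite -cat_cons cat_uniq => /and3P[].
- by move: Hb; rewrite belast_cat all_cat /= => /and3P[].
Qed.

Lemma R'_rp y : y \in R' -> y \notin roots ->
  exists q, root_path col roots y q /\ all (fun x => x \in R') q.
Proof.
move=> yR' yR.
have gen g : g \in [set h; h'] -> (y == g) || (y \in ancestors col roots g) ->
    exists q, root_path col roots y q /\ all (fun x => x \in R') q.
  move=> gi /orP[/eqP ey|ya].
    have [q rq] := rp_exists yR; exists q; split => //.
    apply/allP => z zq; apply: (ancR' gi); rewrite inE; apply/asbP.
    by exists q; rewrite -ey.
  have [q [rq sq]] := anc_rp ya yR; exists q; split => //.
  by apply/allP => z /sq; apply: ancR'.
move: yR'; rewrite /R' !in_setU !in_set1 (negbTE yR) /= -!orbA.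
case/or4P => H.
- by apply: (gen h); [rewrite !inE eqxx | rewrite H].
- by apply: (gen h'); [rewrite !inE eqxx orbT | rewrite H].
- by apply: (gen h); [rewrite !inE eqxx | rewrite H orbT].
- by apply: (gen h'); [rewrite !inE eqxx orbT | rewrite H orbT].
Qed.

Lemma col'_sym x y : col' x y = col' y x.
Proof.
rewrite /col' /add_edge col_sym.
by case: (x =P h); case: (y =P h); case: (x =P h'); case: (y =P h').
Qed.

Lemma F'_sym : symmetric F'.
Proof.
move=> x y; rewrite /F' /forest_rel /hadj col'_sym.
by case: (x \in R'); case: (y \in R').
Qed.

Lemma F_F' u v : u \notin R' -> F u v -> F' u v.
Proof.
move=> uR; rewrite /F /F' /forest_rel /hadj col'_eq // (negbTE uR) /=.
by case/andP => ->.
Qed.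

Lemma acyclic' : acyclic F'.
Proof.
move=> p up sp; apply/negP => cp.
have := Hroot.1 p up sp; rewrite -/F.
case: p up sp cp => //= x p _ _ cp.
by move/negP; apply; apply: sub_path cp; exact: F'F.
Qed.

Lemma exists' x : exists2 a, a \in R' & connect F' x a.
Proof.
case xR: (x \in R'); first by exists x.
have [rho rhoR /connectP[p pth erho]] := count1_ex x.
have lR : last x p \in R' by rewrite -erho rootsR'.
have [q [r0 [_ qn pq lq bq]]] := cut_path pth lR (negbT xR).
exists (last x q) => //; apply/connectP; exists q => //.
by apply: (path_weaken (P := fun z => z \notin R')) pq => // u v; apply: F_F'.
Qed.

Let FR := fun a b => [&& F a b, a \in R' & b \in R'].

Lemma FR_sym : symmetric FR.
Proof. by move=> x y; rewrite /FR F_sym; case: (x \in R'); case: (y \in R'); rewrite ?andbT ?andbF. Qed.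

Lemma D_lem u : u \in R' ->
  exists rho, [/\ rho \in roots, connect FR u rho & connect F u rho].
Proof.
move=> uR.
case uR0: (u \in roots); first by exists u; rewrite !connect0.
have [q [rq aq]] := R'_rp uR (negbT uR0).
have pq := rp_F rq.
have pR := path_restrict uR aq pq.
exists (last u q); split.
- by case/and5P: rq.
- by apply/connectP; exists q.
- by apply/connectP; exists q.
Qed.

Lemma uniq' x a b : a \in R' -> b \in R' -> connect F' x a -> connect F' x b -> a = b.
Proof.
move=> aR bR ca cb.
case: (a =P b) => // nab; exfalso.
have cab : connect F' a b.
  by apply: connect_trans cb; rewrite (sym_connect_sym F'_sym).
move/connectP: cab => [p pth eb].
move: bR nab; rewrite eb; case: (shortenP pth) => p' pth' up _ {p pth eb}.
case: p' pth' up => [|y p''] //= /andP[Fay pth''] up bR nab.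
have yR : y \notin R'.
  by apply/negP => yR; move: Fay; rewrite /F' /forest_rel aR yR andbF.
have [q [r0 [ep qn pq lq bq]]] := cut_path pth'' bR yR.
set b' := last y q in lq.
have nab' : b' != a.
  apply/negP => /eqP eba; move: up; rewrite /= ep inE.
  have : b' \in y :: q by apply: mem_last.
  by rewrite eba inE mem_cat => /orP[->|->]; rewrite ?orbT.
have Fyq : path F' a (y :: q) by rewrite /= Fay.
have cab' : connect F a b'.
  by apply/connectP; exists (y :: q) => //; apply: sub_path Fyq; exact: F'F.
have [rho1 [r1 cr1 cf1]] := D_lem aR.
have [rho2 [r2 cr2 cf2]] := D_lem lq.
have e12 : rho1 = rho2.
  by apply: (count1_uniq (x := a)) => //; apply: connect_trans cf2.
subst rho2.
have cba : connect FR b' a.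
  by apply: connect_trans cr2 _; rewrite (sym_connect_sym FR_sym).
move/connectP: cba => [q1 pq1 ea].
move: ea; case: (shortenP pq1) => q1' pq1' uq1 _ ea.
have Fq1 : path F b' q1' by apply: sub_path pq1' => u v /and3P[].
have Rq1 : all (fun z => z \in R') (b' :: q1').
  apply/andP; split; first exact: lq.
  by apply: (path_all_tgt (e := FR)) pq1' => u v /and3P[].
have uyq : uniq (y :: q).
  move: up; rewrite ep => /andP[_] /andP[yqr]; rewrite cat_uniq => /andP[uq _].
  by rewrite /= uq andbT; apply: contra yqr; rewrite mem_cat => ->.
set I := belast y q.
have := Hroot.1 (b' :: q1' ++ I); rewrite -/F.
have -> : uniq (b' :: q1' ++ I).
  rewrite -cat_cons cat_uniq uq1 /=.
  move: uyq; rewrite lastI rcons_uniq => /andP[_ ->]; rewrite andbT.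
  apply/hasPn => z zI; apply/negP => zb.
  by case/negP: (allP bq z zI); exact: (allP Rq1 z zb).
have -> : 3 <= size (b' :: q1' ++ I).
  rewrite /= size_cat /I size_belast.
  have s1 : 0 < size q1' by rewrite lt0n size_eq0; apply: contra nab' => /eqP e0; rewrite ea e0.
  have s2 : 0 < size q by rewrite lt0n size_eq0.
  by rewrite ltnS -(addn1 1) leq_add.
rewrite /= rcons_cat cat_path Fq1 /=.
have -> : rcons I b' = y :: q by rewrite /I /b' -lastI.
by rewrite -ea (sub_path F'F Fyq) => /(_ isT isT).
Qed.

Lemma rooted' : rooted col' R'.
Proof.
split; first exact: acyclic'.
move=> x; have [a aR ca] := exists' x.
apply/eqP/cards1P; exists a; apply/setP => z; rewrite in_set in_set1.
apply/idP/idP => [/andP[zR cz]|/eqP->]; last by rewrite aR ca.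
by apply/eqP; apply: (uniq' (x := x)).
Qed.

Lemma Pset_sub (V : finType) (phi : W -> V) :
  Pset col' R' phi \subset Pset col roots phi.
Proof.
apply/subsetP => vc; rewrite !inE => /asbP[x [p [xR [rp [ex ec]]]]]; apply/asbP.
case/and5P: rp => pn pth up lR Hb.
have pth0 : path (hadj col) x p.
  apply: (path_weaken (P := fun z => z \notin R')) pth => // u v uR.
  by rewrite /hadj col'_eq.
have ec0 : col x (head x p) = Some vc.2 by rewrite -col'_eq.
have xR0 : x \notin roots by apply: contra xR; apply: rootsR'.
have Hb0 : all (fun z => z \notin roots) (belast x p).
  by apply: sub_all Hb => z; apply: contra; apply: rootsR'.
exists x.
case lR0 : (last x p \in roots).
  by exists p; split => //; split => //; apply/and5P; split.
have [q [rq aq]] := R'_rp lR (negbT lR0).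
case/and5P: rq => qn qpth uq lq bq.
exists (p ++ q); split => //; split; last first.
  by split => //; case: p pn {pth up lR Hb pth0 Hb0 ec lR0 qpth uq lq bq aq} ec0.
apply/and5P; split.
- by case: p pn {pth up lR Hb pth0 Hb0 ec ec0 lR0 qpth uq lq bq aq}.
- by rewrite cat_path pth0.
- move: uq; rewrite cons_uniq => /andP[lq0 uq0].
  rewrite -cat_cons cat_uniq up uq0 andbT /=.
  apply/hasPn => z zq; apply/negP => zp.
  move: zp; rewrite lastI mem_rcons inE => /orP[/eqP ez|zb].
    by rewrite -ez zq in lq0.
  by case/negP: (allP Hb z zb); exact: (allP aq z zq).
- by rewrite last_cat.
- by rewrite belast_cat all_cat Hb0.
Qed.

End Main.

Import Order.TTheory GRing.Theory Num.Theory.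

Theorem lemma2p5 (V W : finType) (t s D : nat) (G : 'I_t -> rel V)
    (col : W -> W -> option 'I_t) (roots : {set W}) (phi : W -> V)
    (h h' : W) (r : 'I_t) :
  graph_family G ->
  colored_graph col ->
  rooted col roots ->
  good_embedding G col roots phi s D ->
  col h h' = None ->
  G r (phi h) (phi h') ->
  let col' := add_edge col h h' r in
  let roots' := roots :|: [set h; h'] :|: ancestors col roots h
                      :|: ancestors col roots h' in
  [/\ colored_graph col', rooted col' roots'
    & good_embedding G col' roots' phi s D].
Proof.
move=> HG Hcol Hroot [[inj Hemb] Hgood] Hhh Gr col' roots'.
have nhh : h != h'.
  by apply/eqP => e; move: Gr; rewrite e (negbTE (HG.1 r (phi h'))).
split.
- split; last exact: col'_sym.
  move=> x; rewrite /col' /add_edge.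
  case: ifP => [/orP[]/andP[/eqP-> /eqP e]|_]; last exact: Hcol.1.
    by rewrite e eqxx in nhh.
  by rewrite e eqxx in nhh.
- exact: rooted'.
split.
  split => // x y i; rewrite /col' /add_edge.
  case: ifP => [/orP[]/andP[/eqP-> /eqP->] [<-] //|_]; last exact: Hemb.
  by rewrite HG.2.
move=> X sX; have := Hgood X sX; rewrite /Rval.
have Hsum : (\sum_(x in X) (D%:Z - (degpre col' phi x.1 x.2)%:Z)
   <= \sum_(x in X) (D%:Z - (degpre col phi x.1 x.2)%:Z))%R.
  apply: ler_sum => x _.
  rewrite lerD2l lerN2 lez_nat.
  apply: leq_sum => w _; apply: subset_leq_card; apply/subsetP => u.
  rewrite !inE /col' /add_edge.
  case: ifP => // /orP[]/andP[/eqP-> /eqP->]; first by rewrite Hhh.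
  by rewrite (proj2 Hcol h' h) Hhh.
have Hp : (#|Pset col' roots' phi :&: X|%:Z <= #|Pset col roots phi :&: X|%:Z)%R.
  by rewrite lez_nat; apply: subset_leq_card; apply: setSI; exact: Pset_sub.
lia.
Qed.
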